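(* Let $\beta\in\mathcal{A}$ and let $f=\sum_{\alpha\in\mathcal{A}}c_\alpha\mathrm{e}^\alpha\in C_X(\mathcal{A},\beta)$ with $c_\beta<0$. Suppose $\nu\in\mathbb{R}^{\mathcal{A}}$ satisfies the relative entropy condition $\mathbf{1}^T\nu=0$, $\nu\ne0$ and $\sigma_X(-\mathcal{A}\nu)+D(\nu_{\setminus\beta},e\,c_{\setminus\beta})\le c_\beta$. If $\nu=\sum_{i=1}^k\theta_i\nu^{(i)}$ is a convex combination (with $\theta_i>0$, $\sum\theta_i=1$) of pairwise non-proportional vectors $\nu^{(i)}\in N_\beta$ ($k\ge2$) and the map $\tilde\nu\mapsto\sigma_X(-\mathcal{A}\tilde\nu)$ is affine on $\operatorname{conv}\{\nu^{(1)},\dots,\nu^{(k)}\}$, then $f$ does not generate an extreme ray of $C_X(\mathcal{A},\beta)$.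
   Context: $X\subset\mathbb{R}^n$ is a nonempty closed convex set and $\mathcal{A}\subset\mathbb{R}^n$ is a nonempty finite set such that the functions $x\mapsto\exp(\alpha^Tx)$, $\alpha\in\mathcal{A}$, are linearly independent on $X$. $\mathbb{R}^{\mathcal{A}}$ denotes real vectors indexed by $\mathcal{A}$; for $c\in\mathbb{R}^{\mathcal{A}}$, $c_{\setminus\beta}\in\mathbb{R}^{\mathcal{A}\setminus\{\beta\}}$ deletes the $\beta$-entry. $\mathcal{A}$ is viewed as the linear map $\mathbb{R}^{\mathcal{A}}\to\mathbb{R}^n$, $\mathcal{A}\nu=\sum_{\alpha}\alpha\nu_\alpha$. $\sigma_X(y)=\sup\{y^Tx:x\in X\}$. $N_\beta=\{\nu\in\mathbb{R}^{\mathcal{A}}:\nu_\alpha\ge0\ \forall\alpha\neq\beta,\ \sum_\alpha\nu_\alpha=0\}$. A signomial supported on $\mathcal{A}$ is $f=\sum_{\alpha\in\mathcal{A}}c_\alpha\mathrm{e}^\alpha$ with $\mathrm{e}^\alpha(x)=\exp(\alpha^Tx)$, identified with its coefficient vector $c$. For $\beta\in\mathcal{A}$, the $X$-AGE cone $C_X(\mathcal{A},\beta)$ is the set of signomials supported on $\mathcal{A}$ that are nonnegative on $X$ and satisfy $c_\alpha\ge0$ for all $\alpha\neq\beta$. The relative entropy is $D(\nu,c)=\sum_\alpha\nu_\alpha\log(\nu_\alpha/c_\alpha)$, continuously extended to nonnegative arguments (with $0\log(0/c)=0$, $\nu\log(\nu/0)=+\infty$ for $\nu>0$), and $D(\nu,c)=+\infty$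 if $\nu$ or $c$ has a negative entry; $e$ is Euler's number. (It is known that $f\in C_X(\mathcal{A},\beta)$ iff some nonzero $\nu$ satisfies the relative entropy condition above.) *)

(* Defs.v *)
From HB Require Import structures.
From mathcomp Require Import all_boot all_order all_algebra.
From mathcomp Require Import all_classical all_reals all_analysis.
Set Implicit Arguments. Unset Strict Implicit. Unset Printing Implicit Defensive.
Import Order.TTheory GRing.Theory Num.Theory.
Import numFieldTopology.Exports.
Local Open Scope classical_set_scope.
Local Open Scope ring_scope.

Section Defs.
Variables (R : realType) (n : nat) (I : finType).

Definition dotv (y x : 'rV[R]_n) : R := \sum_(j < n) y 0 j * x 0 j.

Definition convex_rV (X : set 'rV[R]_n) : Prop :=
  forall x y (t : R), X x -> X y -> 0 <= t -> t <= 1 ->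
    X (t *: x + (1 - t) *: y).

Definition supp_fun (X : set 'rV[R]_n) (y : 'rV[R]_n) : \bar R :=
  ereal_sup [set (dotv y x)%:E | x in X].

Definition Amap (alpha : I -> 'rV[R]_n) (nu : I -> R) : 'rV[R]_n :=
  \sum_(i : I) nu i *: alpha i.

Definition signomial (alpha : I -> 'rV[R]_n) (c : I -> R) (x : 'rV[R]_n) : R :=
  \sum_(i : I) c i * expR (dotv (alpha i) x).

Definition AGE_cone (X : set 'rV[R]_n) (alpha : I -> 'rV[R]_n) (beta : I)
  : set (I -> R) :=
  [set c | (forall x, X x -> 0 <= signomial alpha c x) /\
           (forall i, i != beta -> 0 <= c i)].

Definition N_beta (beta : I) : set (I -> R) :=
  [set nu | (forall i, i != beta -> 0 <= nu i) /\ \sum_(i : I) nu i = 0].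

(* One summand of the relative entropy, extended continuously, with value
   +oo as soon as one argument is negative. *)
Definition relent_term (v c : R) : \bar R :=
  if (v < 0) || (c < 0) then +oo%E
  else if v == 0 then 0%E
  else if c == 0 then +oo%E
  else (v * ln (v / c))%:E.

Definition relent_minus (beta : I) (nu d : I -> R) : \bar R :=
  (\sum_(i : I | i != beta) relent_term (nu i) (d i))%E.

Definition proportional (u v : I -> R) : Prop :=
  exists t : R, (u = fun i => t * v i) \/ (v = fun i => t * u i).

Definition conv_hull (k : nat) (pts : 'I_k -> I -> R) : set (I -> R) :=
  [set w | exists lam : 'I_k -> R, (forall j, 0 <= lam j) /\
      \sum_(j < k) lam j = 1 /\ w = fun i => \sum_(j < k) lam j * pts j i].

Definition affine_on (phi : (I -> R) -> \bar R) (S : set (I -> R)) : Prop :=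
  exists (a : I -> R) (b : R),
    forall w, S w -> phi w = (\sum_(i : I) a i * w i + b)%:E.

Definition extreme_ray (K : set (I -> R)) (f : I -> R) : Prop :=
  K f /\ f <> (fun _ => 0) /\
  forall g h : I -> R, K g -> K h -> f = (fun i => g i + h i) ->
    exists t : R, 0 <= t /\ g = (fun i => t * f i).

End Defs.

(* Main.v *)
Require Import Defs.
From HB Require Import structures.
From mathcomp Require Import all_boot all_order all_algebra.
From mathcomp Require Import all_classical all_reals all_analysis.
From mathcomp Require Import ring lra.
Import Order.TTheory GRing.Theory Num.Theory.
Import numFieldTopology.Exports.
Local Open Scope classical_set_scope.
Local Open Scope ring_scope.
Lemma dotv_Amap (R : realType) (n : nat) (I : finType)
  (alpha : I -> 'rV[R]_n) (mu : I -> R) (x : 'rV[R]_n) :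
  dotv (- Amap alpha mu) x = - \sum_a mu a * dotv (alpha a) x.
Proof.
rewrite /dotv /Amap.
transitivity (\sum_(j < n) \sum_a - (mu a * alpha a 0 j * x 0 j)).
  apply: eq_bigr => j _; rewrite mxE summxE -sumrN mulr_suml; apply: eq_bigr => a _.
  by rewrite !mxE mulNr.
rewrite exchange_big /= -sumrN; apply: eq_bigr => a _.
rewrite sumrN mulr_sumr; congr (- _); apply: eq_bigr => j _; by rewrite mulrA.
Qed.

Lemma age_suff (R : realType) (n : nat) (I : finType)
  (alpha : I -> 'rV[R]_n) (X : set 'rV[R]_n) (beta : I) (d mu w : I -> R) (s : R) :
 \sum_i mu i = 0 ->
 (forall a, a != beta -> 0 <= d a) ->
 (forall a, a != beta -> forall y, mu a * y - w a <= d a * expR y) ->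
 (forall x, X x -> dotv (- Amap alpha mu) x <= s) ->
 s + \sum_(a | a != beta) w a <= d beta ->
 AGE_cone X alpha beta d.
Proof.
move=> hmu hd hpt hs hsum; split => // x Xx.
pose y a := dotv (alpha a) x - dotv (alpha beta) x.
have E : signomial alpha d x = expR (dotv (alpha beta) x) * \sum_a d a * expR (y a).
  rewrite /signomial mulr_sumr; apply: eq_bigr => a _.
  by rewrite /y mulrCA -expRD; congr (_ * expR _); rewrite addrC subrK.
rewrite E; apply: mulr_ge0; first exact: ltW (expR_gt0 _).
rewrite (bigD1 beta) //= /y subrr expR0 mulr1.
have h1 : \sum_(a | a != beta) (mu a * y a - w a) <= \sum_(a | a != beta) d a * expR (y a).
  by apply: ler_sum => a ha; apply: hpt.
have h2 : \sum_(a | a != beta) mu a * y a = - dotv (- Amap alpha mu) x.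
  rewrite dotv_Amap opprK.
  have -> : \sum_(a | a != beta) mu a * y a = \sum_a mu a * y a.
    by rewrite [RHS](bigD1 beta) //= /y subrr mulr0 add0r.
  rewrite /y; under eq_bigr => a _ do rewrite mulrBr.
  by rewrite sumrB -mulr_suml hmu mul0r subr0.
have h3 := hs x Xx.
rewrite sumrB h2 in h1.
rewrite /y in h1; move: h1 hsum; set W := \sum_(a | a != beta) w a; set D := \sum_(a | a != beta) (d a * _) => h1 hsum.
lra.
Qed.

Lemma relent_ge (R : realType) (v c : R) :
  ((v * ln (v / c))%:E <= relent_term v c)%E.
Proof.
rewrite /relent_term; case: ifP => _; first exact: leey.
case: ifP => [/eqP -> | _]; first by rewrite mul0r.
by case: ifP => _; [exact: leey|].
Qed.

Lemma relent_pos (R : realType) (v c : R) :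
  0 < v -> relent_term v c != +oo%E -> 0 < c.
Proof.
move=> v0; rewrite /relent_term; case: ifP => [//| /norP [_ ]].
rewrite (gt_eqF v0) -leNgt le_eqVlt => /orP [/eqP <-|//].
by rewrite eqxx.
Qed.

Lemma ptwise (R : realType) (m v c y : R) :
  0 <= m -> 0 < v -> 0 < c ->
  m * y - m * ln (v / (expR 1 * c)) <= c * m / v * expR y.
Proof.
move=> m0 v0 c0.
have q0 : 0 < v / c by rewrite divr_gt0.
have hl : ln (v / (expR 1 * c)) = ln (v / c) - 1.
  have -> : v / (expR 1 * c) = (v / c) * (expR 1)^-1.
    by rewrite invfM; ring.
  rewrite lnM ?posrE ?invr_gt0 ?expR_gt0 //.
  by rewrite lnV ?posrE ?expR_gt0 // expRK.
have he : c * m / v * expR y = m * expR (y - ln (v / c)).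
  rewrite expRD expRN lnK ?posrE // invfM invrK.
  ring.
rewrite hl he -mulrBr; apply: ler_wpM2l => //.
have := expR_ge1Dx (y - ln (v / c)); lra.
Qed.

Lemma cone_scale (R : realType) (n : nat) (I : finType)
  (alpha : I -> 'rV[R]_n) (X : set 'rV[R]_n) (beta : I) (d : I -> R) (t : R) :
  0 <= t -> AGE_cone X alpha beta d -> AGE_cone X alpha beta (fun a => t * d a).
Proof.
move=> t0 [h1 h2]; split=> [x Xx|a ha]; last by rewrite mulr_ge0 // h2.
have -> : signomial alpha (fun a => t * d a) x = t * signomial alpha d x.
  by rewrite /signomial mulr_sumr; apply: eq_bigr => a _; rewrite mulrA.
by rewrite mulr_ge0 // h1.
Qed.

Lemma cone_add (R : realType) (n : nat) (I : finType)
  (alpha : I -> 'rV[R]_n) (X : set 'rV[R]_n) (beta : I) (d1 d2 : I -> R) :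
  AGE_cone X alpha beta d1 -> AGE_cone X alpha beta d2 ->
  AGE_cone X alpha beta (fun a => d1 a + d2 a).
Proof.
move=> [h1 h2] [g1 g2]; split=> [x Xx|a ha]; last by rewrite addr_ge0 ?h2 ?g2.
have -> : signomial alpha (fun a => d1 a + d2 a) x =
   signomial alpha d1 x + signomial alpha d2 x.
  by rewrite /signomial -big_split; apply: eq_bigr => a _; rewrite mulrDl.
by rewrite addr_ge0 ?h1 ?g1.
Qed.

Lemma cone_sum (R : realType) (n : nat) (I J : finType)
  (alpha : I -> 'rV[R]_n) (X : set 'rV[R]_n) (beta : I) (P : pred J) (F : J -> I -> R) :
  (forall j, P j -> AGE_cone X alpha beta (F j)) ->
  AGE_cone X alpha beta (fun a => \sum_(j | P j) F j a).
Proof.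
move=> hF; split=> [x Xx|a ha].
  have -> : signomial alpha (fun a => \sum_(j | P j) F j a) x =
     \sum_(j | P j) signomial alpha (F j) x.
    rewrite /signomial exchange_big /=; apply: eq_bigr => a _; by rewrite mulr_suml.
  by apply: sumr_ge0 => j Pj; case: (hF j Pj) => h _; apply: h.
by apply: sumr_ge0 => j Pj; case: (hF j Pj) => _ h; apply: h.
Qed.

Lemma cone_nonneg (R : realType) (n : nat) (I : finType)
  (alpha : I -> 'rV[R]_n) (X : set 'rV[R]_n) (beta : I) (d : I -> R) :
  (forall a, 0 <= d a) -> AGE_cone X alpha beta d.
Proof.
move=> hd; split=> // x Xx; apply: sumr_ge0 => a _.
by rewrite mulr_ge0 // ltW // expR_gt0.
Qed.
Theorem lemma4p1 (R : realType) (n : nat) (I : finType)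
  (alpha : I -> 'rV[R]_n) (X : set 'rV[R]_n)
  (X_nonempty : X !=set0) (X_closed : closed X) (X_convex : convex_rV X)
  (alpha_inj : injective alpha)
  (lin_indep : forall c : I -> R,
      (forall x, X x -> signomial alpha c x = 0) -> forall i, c i = 0)
  (beta : I) (c : I -> R)
  (hf : AGE_cone X alpha beta c) (hcbeta : c beta < 0)
  (nu : I -> R) (hnu_sum : \sum_(i : I) nu i = 0) (hnu_nz : exists i, nu i != 0)
  (hrel : (supp_fun X (- Amap alpha nu)
            + relent_minus beta nu (fun i => (expR 1 * c i)%R) <= (c beta)%:E)%E)
  (k : nat) (hk : (2 <= k)%N) (theta : 'I_k -> R) (nus : 'I_k -> I -> R)
  (htheta_pos : forall j, 0 < theta j) (htheta_sum : \sum_(j < k) theta j = 1)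
  (hnus : forall j, N_beta beta (nus j))
  (hnonprop : forall j1 j2, j1 != j2 -> ~ proportional (nus j1) (nus j2))
  (hcomb : nu = fun i => \sum_(j < k) theta j * nus j i)
  (haff : affine_on (fun w => supp_fun X (- Amap alpha w)) (conv_hull nus)) :
  ~ extreme_ray (AGE_cone X alpha beta) c.
Proof.
move=> [_ [_ hext]].
have [hfpos hfcoef] := hf.
have hnuE : forall a, nu a = \sum_(j < k) theta j * nus j a by move=> a; rewrite hcomb.
have hnn : forall a, a != beta -> 0 <= nu a.
  move=> a ha; rewrite hnuE; apply: sumr_ge0 => j _.
  apply: mulr_ge0; [exact: ltW | case: (hnus j) => h _; exact: h].
have hz : forall a, a != beta -> nu a = 0 -> forall j, nus j a = 0.
  move=> a ha; rewrite hnuE => h0 j.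
  have hge : forall i : 'I_k, true -> 0 <= theta i * nus i a.
    move=> i _; apply: mulr_ge0; [exact: ltW | case: (hnus i) => h _; exact: h].
  have : theta j * nus j a = 0 := psumr_eq0P hge h0 isT.
  by move/eqP; rewrite mulf_eq0 (gt_eqF (htheta_pos j)) /= => /eqP.
have [aa [bb haffE]] := haff.
pose sig j := \sum_i aa i * nus j i + bb.
have hsigj : forall j, supp_fun X (- Amap alpha (nus j)) = (sig j)%:E.
  move=> j; apply: haffE; exists (fun j' => (j' == j)%:R); split; first by move=> j'; exact: ler0n.
  split; first by rewrite (bigD1 j) //= eqxx big1 ?addr0 // => j' /negbTE ->.
  apply: funext => i /=; rewrite (bigD1 j) //= eqxx mul1r big1 ?addr0 // => j' /negbTE ->.
  by rewrite mul0r.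
have hsig : supp_fun X (- Amap alpha nu) = (\sum_i aa i * nu i + bb)%:E.
  apply: haffE; exists theta; split; first by move=> j; exact: ltW.
  by split.
pose L a := ln (nu a / (expR 1 * c a)).
have hDge : forall P : pred I, ((\sum_(a | P a) nu a * L a)%:E <=
     \sum_(a | P a) relent_term (nu a) (expR 1 * c a))%E.
  by move=> P; rewrite -sumEFin; apply: lee_sum => a _; exact: relent_ge.
have hS : \sum_i aa i * nu i + bb + \sum_(a | a != beta) nu a * L a <= c beta.
  rewrite -lee_fin EFinD -hsig; apply: le_trans hrel; apply: leeD2l; exact: hDge.
have hcpos : forall a, a != beta -> nu a != 0 -> 0 < c a.
  move=> a ha hna.
  have nua : 0 < nu a by rewrite lt_def hna hnn.
  have : 0 < expR 1 * c a.
    apply: (relent_pos _ _ _ nua); apply/negP => /eqP hinf.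
    move: hrel; rewrite /relent_minus (bigD1 a) //= hinf hsig.
    have hr := hDge (fun i => (i != beta) && (i != a)).
    rewrite addye; last by rewrite (gt_eqF (lt_le_trans (ltNyr _) hr)).
    rewrite addey //.
  by rewrite pmulr_rgt0 ?expR_gt0.
pose cj (j : 'I_k) a := if a == beta then sig j + \sum_(b | b != beta) nus j b * L b
               else if nu a == 0 then c a else c a * nus j a / nu a.
have hgK : forall j, AGE_cone X alpha beta (fun a => theta j * cj j a).
  move=> j; apply: cone_scale; first exact: ltW.
  have [hnusn hnuss] := hnus j.
  apply: (age_suff _ _ _ alpha X beta (cj j) (nus j) (fun b => nus j b * L b) (sig j)) => //.
  - move=> a ha; rewrite /cj (negbTE ha); case: ifP => [_|/negbT hna]; first exact: hfcoef.
    apply: divr_ge0; last exact: hnn.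
    by apply: mulr_ge0; [exact: ltW (hcpos a ha hna) | exact: hnusn].
  - move=> a ha y; rewrite /cj (negbTE ha); case: ifP => [/eqP h0|/negbT hna].
      rewrite (hz a ha h0 j) !mul0r subr0; apply: mulr_ge0; [exact: hfcoef | exact: ltW (expR_gt0 _)].
    apply: ptwise; [exact: hnusn | by rewrite lt_def hna hnn | exact: hcpos].
  - move=> x Xx; rewrite -lee_fin -hsigj; apply: ereal_sup_ubound; by exists x.
  - by rewrite /cj eqxx.
have hsumc : forall a, a != beta -> \sum_j theta j * cj j a = c a.
  move=> a ha; rewrite /cj (negbTE ha); case: (eqVneq (nu a) 0) => [h0|hna].
    by rewrite -mulr_suml htheta_sum mul1r.
  transitivity (c a / nu a * \sum_j theta j * nus j a).
    rewrite mulr_sumr; apply: eq_bigr => j _; ring.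
  by rewrite -hnuE divfK.
have hdelta : \sum_j theta j * cj j beta <= c beta.
  have -> : \sum_j theta j * cj j beta = \sum_i aa i * nu i + bb + \sum_(b | b != beta) nu b * L b; last exact: hS.
  rewrite /cj eqxx; under eq_bigr => j _ do rewrite mulrDr.
  rewrite big_split /=; congr (_ + _).
    rewrite /sig; under eq_bigr => j _ do rewrite mulrDr.
    rewrite big_split /= -mulr_suml htheta_sum mul1r; congr (_ + _).
    under [in RHS]eq_bigr => i _ do rewrite hnuE mulr_sumr.
    rewrite exchange_big /=; apply: eq_bigr => j _; rewrite mulr_sumr; apply: eq_bigr => i _; ring.
  under [in RHS]eq_bigr => i _ do rewrite hnuE mulr_suml.
  rewrite exchange_big /=; apply: eq_bigr => j _; rewrite mulr_sumr; apply: eq_bigr => i _; ring.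
have hhK : forall j, AGE_cone X alpha beta (fun a => c a - theta j * cj j a).
  move=> j.
  have -> : (fun a => c a - theta j * cj j a) = (fun a => (\sum_(i | i != j) theta i * cj i a) +
       (if a == beta then c beta - \sum_i theta i * cj i beta else 0)).
    apply: funext => a /=.
    have e : \sum_i theta i * cj i a = theta j * cj j a + \sum_(i | i != j) theta i * cj i a.
      by rewrite (bigD1 j).
    case: eqP => [ha|/eqP ha].
      rewrite -ha in e *; rewrite e; ring.
    by rewrite -(hsumc a ha) e addr0; ring.
  apply: cone_add.
    exact: (cone_sum _ _ _ _ alpha X beta (fun i => i != j) (fun i a => theta i * cj i a) (fun i _ => hgK i)).
  apply: cone_nonneg => a; case: eqP => _ //.
  by rewrite subr_ge0.
have hprop : forall j, exists s, nus j = fun i => s * nu i.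
  move=> j.
  have hc : c = (fun a => theta j * cj j a + (c a - theta j * cj j a)).
    by apply: funext => a; rewrite addrC subrK.
  have [t [t0 ht]] := hext _ _ (hgK j) (hhK j) hc.
  have hp : forall a, theta j * cj j a = t * c a by move=> a; exact: (congr1 (fun f => f a) ht).
  have hth := htheta_pos j.
  have hth0 : theta j != 0 by rewrite gt_eqF.
  have hne : forall a, a != beta -> nus j a = t / theta j * nu a.
    move=> a ha; case: (eqVneq (nu a) 0) => [h0|hna]; first by rewrite (hz a ha h0 j) h0 mulr0.
    have := hp a; rewrite /cj (negbTE ha) (negbTE hna) => e.
    have hc0 : c a != 0 by rewrite gt_eqF ?hcpos.
    have -> : nus j a = theta j * (c a * nus j a / nu a) * nu a / (theta j * c a).
      by field; rewrite ?hth0 ?hc0 ?hna.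
    by rewrite e; field; rewrite ?hth0 ?hc0 ?hna.
  have hsb : forall f : I -> R, \sum_i f i = 0 -> f beta = - \sum_(a | a != beta) f a.
    by move=> f; rewrite (bigD1 beta) //= => /eqP; rewrite addr_eq0 => /eqP.
  exists (t / theta j); apply: funext => a.
  case: (eqVneq a beta) => [->|ha]; last exact: hne.
  rewrite (hsb _ (hnus j).2) (hsb _ hnu_sum) mulrN mulr_sumr; congr (- _).
  by apply: eq_bigr => b hb; exact: hne.
have k0 : (0 < k)%N by exact: ltnW.
pose j0 : 'I_k := Ordinal k0.
pose j1 : 'I_k := Ordinal hk.
have hneq : j0 != j1 by [].
apply: (hnonprop j0 j1 hneq).
have [s0 e0] := hprop j0.
have [s1 e1] := hprop j1.
case: (eqVneq s0 0) => [hs0|hs0].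
  exists 0; left; rewrite e0 hs0; apply: funext => i; by rewrite !mul0r.
exists (s1 / s0); right; rewrite e0 e1; apply: funext => i.
by field; rewrite ?hs0.
Qed.
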